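(* Let $d\geq 1$ be a fixed integer. For each integer $n\geq1$ define $f_n:\mathbb{R}\to\mathbb{R}$ to be the function which is constant on each interval $\left[\frac{k-\frac nd}{\sqrt{n/d}},\frac{k+1-\frac nd}{\sqrt{n/d}}\right)$, $k\in\mathbb{Z}$, and satisfies $$f_n\!\left(\frac{k-\frac nd}{\sqrt{n/d}}\right)=\begin{cases}\sqrt{\frac nd}\,\dfrac{(n/d)^k e^{-n/d}}{k!} & \text{if } k \text{ is a non-negative integer},\\ 0 & \text{if } k \text{ is a negative integer}.\end{cases}$$ For a function $f:\mathbb{R}\to\mathbb{R}$ define $\Delta_n f(y)=\dfrac{f\big(y+\sqrt{d/n}\big)-f(y)}{\sqrt{d/n}}$ and let $\Delta_n^\alpha$ denote its $\alpha$-fold iterate. Then for each integer $\alpha\geq0$ and each $y\in\mathbb{R}$, $$\lim_{n\to\infty}\Delta_n^\alpha f_n(y)=\frac{\mathrm{d}^\alpha}{\mathrm{d}y^\alpha}\left(\frac{1}{\sqrt{2\pi}}e^{-y^2/2}\right).$$ Furthermore, for each integer $\alpha\geq0$ there exists a polynomial $P_\alpha$ such that $|\Delta_n^\alpha f_n(y)|<P_\alpha(y)e^{-|y|}$ for all $n\geq1$ and all $y\in\mathbb{R}$. *)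

(* Defs.v *)
From Stdlib Require Import Reals Lra Lia ZArith List.
From Coquelicot Require Import Coquelicot.
Open Scope R_scope.

Definition lam (d n : nat) : R := INR n / INR d.

(* f_n(y): constant on [(k - n/d)/sqrt(n/d), (k+1-n/d)/sqrt(n/d)), k in Z;
   y lies in the k-th interval iff k = floor(y*sqrt(n/d) + n/d). *)
Definition f_n (d n : nat) (y : R) : R :=
  let l := lam d n in
  let k := Int_part (y * sqrt l + l) in
  if (k <? 0)%Z then 0
  else sqrt l * (l ^ (Z.to_nat k) * exp (- l) / INR (fact (Z.to_nat k))).

Definition step (d n : nat) : R := sqrt (INR d / INR n).

Definition Delta (d n : nat) (f : R -> R) : R -> R :=
  fun y => (f (y + step d n) - f y) / step d n.

Definition Delta_iter (d n alpha : nat) (f : R -> R) : R -> R :=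
  Nat.iter alpha (Delta d n) f.

Definition gauss (y : R) : R := / sqrt (2 * PI) * exp (- y ^ 2 / 2).

(* real polynomial given by its list of coefficients (constant term first) *)
Fixpoint peval (p : list R) (y : R) : R :=
  match p with
  | nil => 0
  | c :: q => c + y * peval q y
  end.

(* Main.v *)
Require Import Defs.
From Stdlib Require Import Reals Lra Lia ZArith List.
From Coquelicot Require Import Coquelicot.
Open Scope R_scope.

Lemma mono_le (f df : R -> R) a b : a <= b ->
  (forall x, a <= x <= b -> is_derive f x (df x)) ->
  (forall x, a <= x <= b -> 0 <= df x) -> f a <= f b.
Proof.
intros hab hd hpos.
destruct (Req_dec a b) as [->|hne]; [lra|].
destruct (MVT_gen f a b df) as [c [hc e]].
- intros x hx. apply hd. rewrite Rmin_left, Rmax_right in hx; lra.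
- intros x hx. rewrite Rmin_left, Rmax_right in hx by lra.
  apply continuity_pt_filterlim. apply (ex_derive_continuous (V:=R_NormedModule)). exists (df x). apply hd; lra.
- rewrite Rmin_left, Rmax_right in hc by lra.
  assert (0 <= df c) by (apply hpos; lra). nra.
Qed.

Lemma lnA u : -1 < u -> ln (1 + u) <= u.
Proof.
intros hu. rewrite <- (ln_exp u) at 2. apply ln_le; [lra|].
destruct (Req_dec u 0) as [->|h]; [rewrite exp_0; lra|].
left; apply exp_ineq1; auto.
Qed.

Lemma lnB u : 0 <= u -> 2 * u / (2 + u) <= ln (1 + u).
Proof.
intros hu.
assert (H := mono_le (fun x => ln (1 + x) - 2 * x / (2 + x))
  (fun x => x ^ 2 / ((1 + x) * (2 + x) ^ 2)) 0 u hu).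
simpl in H. replace (1 + 0) with 1 in H by ring. rewrite ln_1 in H.
assert (0 <= ln (1 + u) - 2 * u / (2 + u)); [|lra].
replace (0) with (0 - 2 * 0 / (2 + 0)) at 1 by (field; lra).
apply H.
- intros x hx. auto_derive. lra. field. lra.
- intros x hx. apply Rle_mult_inv_pos. nra. apply Rmult_lt_0_compat; [lra|]. nra.
Qed.

Lemma lnC w : 0 < w -> w <= 1 -> (w - / w) / 2 <= ln w.
Proof.
intros h0 h1.
assert (H := mono_le (fun x => (x - / x) / 2 - ln x)
  (fun x => (x - 1) ^ 2 / (2 * x ^ 2)) w 1 h1).
simpl in H. rewrite ln_1 in H.
assert ((w - / w) / 2 - ln w <= 0); [|lra].
replace 0 with ((1 - / 1) / 2 - 0) by (field).
apply H.
- intros x hx. auto_derive. lra. field. lra.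
- intros x hx. apply Rle_mult_inv_pos. nra. nra.
Qed.

Lemma lnD x : 0 <= x -> ln (1 + x) <= x - x ^ 2 / 2 + x ^ 3 / 3.
Proof.
intros hx.
assert (H := mono_le (fun t => t - t ^ 2 / 2 + t ^ 3 / 3 - ln (1 + t))
  (fun t => t ^ 3 / (1 + t)) 0 x hx).
cbv beta in H. replace (1 + 0) with 1 in H by ring. rewrite ln_1 in H.
assert (0 <= x - x ^ 2 / 2 + x ^ 3 / 3 - ln (1 + x)); [|lra].
eapply Rle_trans; [|apply H].
- right; field.
- intros t ht. auto_derive. lra. field. lra.
- intros t ht. apply Rle_mult_inv_pos. apply pow_le; lra. lra.
Qed.

Definition phi (u : R) := (1 + u) * ln (1 + u) - u.

Lemma phiL1 u : -1 < u -> u <= 0 -> u ^ 2 / 2 <= phi u.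
Proof.
intros h0 h1. unfold phi.
assert (H := lnC (1 + u) ltac:(lra) ltac:(lra)).
assert (E : (1 + u) * (((1 + u) - / (1 + u)) / 2) = u + u ^ 2 / 2) by (field; lra).
assert (0 < 1 + u) by lra.
assert ((1 + u) * (((1 + u) - / (1 + u)) / 2) <= (1 + u) * ln (1 + u)) by
  (apply Rmult_le_compat_l; lra).
lra.
Qed.

Lemma phiL2 u : 0 <= u -> u ^ 2 / (2 * (1 + u)) <= phi u.
Proof.
intros h. unfold phi.
assert (H := lnB u h).
assert ((1 + u) * (2 * u / (2 + u)) <= (1 + u) * ln (1 + u)) by
  (apply Rmult_le_compat_l; lra).
assert (u ^ 2 / (2 * (1 + u)) <= (1 + u) * (2 * u / (2 + u)) - u); [|lra].
replace ((1 + u) * (2 * u / (2 + u)) - u) with (u ^ 2 / (2 + u)) by (field; lra).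
unfold Rdiv. apply Rmult_le_compat_l. nra.
apply Rinv_le_contravar; lra.
Qed.

Lemma is_derive_phi x : -1 < x -> is_derive phi x (ln (1 + x)).
Proof. intros h. unfold phi. auto_derive. lra. field. lra. Qed.

Lemma mono_0 (f df : R -> R) a b : a <= b ->
  (forall x, a <= x <= b -> is_derive f x (df x)) ->
  (forall x, a <= x <= b -> 0 <= df x) -> f a = 0 -> 0 <= f b.
Proof. intros h1 h2 h3 h4. rewrite <- h4. apply (mono_le f df); auto. Qed.

Lemma mono_0' (f df : R -> R) a b : a <= b ->
  (forall x, a <= x <= b -> is_derive f x (df x)) ->
  (forall x, a <= x <= b -> 0 <= df x) -> f b = 0 -> f a <= 0.
Proof. intros h1 h2 h3 h4. rewrite <- h4. apply (mono_le f df); auto. Qed.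

Lemma phiL3 u : -1/2 <= u <= 1/2 -> Rabs (phi u - u ^ 2 / 2) <= Rabs u ^ 3.
Proof.
intros hu.
destruct (Rle_dec 0 u) as [hp|hn].
- rewrite (Rabs_pos_eq u hp).
  assert (A1 : 0 <= u ^ 2 / 2 - phi u).
  { apply (mono_0 (fun t => t ^ 2 / 2 - phi t) (fun t => t - ln (1 + t)) 0 u hp).
    - intros t ht. unfold phi. auto_derive. lra. field. lra.
    - intros t ht. assert (ln (1 + t) <= t) by (apply lnA; lra). lra.
    - unfold phi. replace (1+0) with 1 by ring. rewrite ln_1. field. }
  assert (A2 : 0 <= phi u - u ^ 2 / 2 + u ^ 3).
  { apply (mono_0 (fun t => phi t - t ^ 2 / 2 + t ^ 3) (fun t => ln (1 + t) - t + 3 * t ^ 2) 0 u hp).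
    - intros t ht. unfold phi. auto_derive. lra. field. lra.
    - intros t ht. assert (H := lnB t ltac:(lra)).
      assert (t - t ^ 2 / 2 <= 2 * t / (2 + t)).
      { apply (Rmult_le_reg_r (2 + t)); [lra|]. unfold Rdiv. rewrite Rmult_assoc, Rinv_l by lra.
        nra. }
      nra.
    - unfold phi. replace (1+0) with 1 by ring. rewrite ln_1. field. }
  apply Rabs_le. lra.
- assert (hn' : u < 0) by lra.
  rewrite (Rabs_left u hn').
  assert (A1 := phiL1 u ltac:(lra) ltac:(lra)).
  assert (A2 : phi u - u ^ 2 / 2 + u ^ 3 <= 0).
  { apply (mono_0' (fun t => phi t - t ^ 2 / 2 + t ^ 3) (fun t => ln (1 + t) - t + 3 * t ^ 2) u 0); [lra| | |].
    - intros t ht. unfold phi. auto_derive. lra. field. lra.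
    - intros t ht. assert (H := lnC (1 + t) ltac:(lra) ltac:(lra)).
      assert (0 <= ((1 + t) - / (1 + t)) / 2 - t + 3 * t ^ 2); [|lra].
      replace (((1 + t) - / (1 + t)) / 2 - t + 3 * t ^ 2) with (t ^ 2 * (5 + 6 * t) / (2 * (1 + t)))
        by (field; lra).
      apply Rle_mult_inv_pos. apply Rmult_le_pos. nra. lra. lra.
    - unfold phi. replace (1+0) with 1 by ring. rewrite ln_1. field. }
  apply Rabs_le. split; nra.
Qed.

Definition bst (k : nat) : R :=
  ln (INR (fact k)) - (INR k + / 2) * ln (INR k) + INR k.

Lemma INR_fact_pos k : 0 < INR (fact k).
Proof. apply lt_0_INR. apply lt_O_fact. Qed.

Lemma bst_step k : (1 <= k)%nat ->
  bst k - bst (S k) = (INR k + /2) * ln (1 + / INR k) - 1.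
Proof.
intros hk. assert (hk' : 1 <= INR k) by (apply (le_INR 1); auto).
unfold bst. rewrite fact_simpl, mult_INR, ln_mult by (try apply INR_fact_pos; rewrite S_INR; lra).
rewrite S_INR.
replace (INR k + 1) with (INR k * (1 + / INR k)) by (field; repeat split; lra).
rewrite ln_mult by (try apply Rlt_gt; try lra; assert (0 < / INR k) by (apply Rinv_0_lt_compat; lra); lra).
field; lra.
Qed.

Lemma bst_step_bounds k : (1 <= k)%nat ->
  0 <= bst k - bst (S k) <= / (2 * INR k) - / (2 * (INR k + 1)).
Proof.
intros hk. assert (hk' : 1 <= INR k) by (apply (le_INR 1); auto).
rewrite bst_step by auto.
set (x := / INR k).
assert (hx0 : 0 < x) by (apply Rinv_0_lt_compat; lra).
assert (hx1 : x <= 1) by (unfold x; rewrite <- Rinv_1; apply Rinv_le_contravar; lra).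
assert (ek : INR k = / x) by (unfold x; rewrite Rinv_inv; auto).
rewrite ek.
split.
- assert (H := lnB x ltac:(lra)).
  assert ((/ x + / 2) * (2 * x / (2 + x)) = 1) by (field; repeat split; lra).
  assert ((/ x + / 2) * (2 * x / (2 + x)) <= (/ x + / 2) * ln (1 + x)).
  { apply Rmult_le_compat_l; [|lra]. assert (0 < / x) by (apply Rinv_0_lt_compat; lra). lra. }
  lra.
- assert (H := lnD x ltac:(lra)).
  assert ((/ x + / 2) * ln (1 + x) <= (/ x + / 2) * (x - x ^ 2 / 2 + x ^ 3 / 3)).
  { apply Rmult_le_compat_l; [|lra]. assert (0 < / x) by (apply Rinv_0_lt_compat; lra). lra. }
  assert ((/ x + / 2) * (x - x ^ 2 / 2 + x ^ 3 / 3) - 1 <= / (2 * / x) - / (2 * (/ x + 1))); [|lra].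
  replace ((/ x + / 2) * (x - x ^ 2 / 2 + x ^ 3 / 3) - 1) with (x^2/12 + x^3/6) by (field; repeat split; lra).
  replace (/ (2 * / x) - / (2 * (/ x + 1))) with (x ^ 2 / (2 * (1 + x))) by (field; repeat split; lra).
  apply (Rmult_le_reg_r (2 * (1 + x))); [lra|].
  unfold Rdiv. rewrite Rmult_assoc, Rinv_l by lra. rewrite Rmult_1_r.
  replace ((x ^ 2 * / 12 + x ^ 3 * / 6) * (2 * (1 + x))) with (x ^ 2 * ((1 + 2 * x) * (1 + x) / 6)) by field.
  assert ((1 + 2 * x) * (1 + x) <= 6) by nra. assert (0 <= x ^ 2) by nra. nra.
Qed.

Definition bs (n : nat) := bst (S n).

Lemma bs_decr n : bs (S n) <= bs n.
Proof. unfold bs. assert (H := bst_step_bounds (S n) ltac:(lia)). lra. Qed.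

Lemma bs_lower n : 1/2 <= bs n - / (2 * INR (S n)).
Proof.
induction n.
- unfold bs, bst. simpl. rewrite ln_1. lra.
- assert (H := bst_step_bounds (S n) ltac:(lia)). unfold bs in *.
  rewrite (S_INR (S n)). lra.
Qed.

Lemma bs_ge n : 1/2 <= bs n.
Proof.
assert (H := bs_lower n). assert (0 < / (2 * INR (S n))).
{ apply Rinv_0_lt_compat. rewrite S_INR. assert (0 <= INR n) by apply pos_INR. lra. }
lra.
Qed.

Definition Bc : R := real (Lim_seq bs).

Lemma bs_lim : is_lim_seq bs Bc.
Proof.
assert (H : ex_finite_lim_seq bs) by (apply (ex_finite_lim_seq_decr bs (1/2)); [apply bs_decr | apply bs_ge]).
destruct (proj1 (ex_finite_lim_seq_correct bs) H) as [_ Hf].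
unfold Bc. assert (E := Lim_seq_correct' bs H). unfold is_finite in Hf. rewrite <- Hf in E. exact E.
Qed.

Lemma bs_ge_B n : Bc <= bs n.
Proof. apply is_lim_seq_decr_compare. apply bs_lim. apply bs_decr. Qed.

Definition W (n : nat) : R := RInt (fun x => sin x ^ n) 0 (PI / 2).

Lemma cont_sinpow n x : continuous (fun x => sin x ^ n) x.
Proof.
apply (ex_derive_continuous (V:=R_NormedModule)). auto_derive. auto.
Qed.

Lemma ex_RInt_sinpow n : ex_RInt (fun x => sin x ^ n) 0 (PI / 2).
Proof. apply (ex_RInt_continuous (V:=R_CompleteNormedModule)). intros; apply cont_sinpow. Qed.

Lemma W0 : W 0 = PI / 2.
Proof. unfold W. simpl. rewrite (RInt_const (V:=R_CompleteNormedModule)). unfold scal; simpl. unfold mult; simpl. ring. Qed.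

Lemma W1 : W 1 = 1.
Proof.
unfold W. apply is_RInt_unique.
replace 1 with (minus ((fun x => - cos x) (PI / 2)) ((fun x => - cos x) 0)).
2:{ cbv beta. rewrite cos_PI2, cos_0. unfold minus, plus, opp; simpl. ring. }
apply (is_RInt_derive (V:=R_CompleteNormedModule) (fun x => - cos x)).
- intros x _. auto_derive. auto. ring.
- intros x _. apply cont_sinpow.
Qed.

Lemma W_rec n : INR (n + 2) * W (n + 2) = INR (n + 1) * W n.
Proof.
assert (H : is_RInt (fun x => INR (n + 2) * sin x ^ (n + 2) - INR (n + 1) * sin x ^ n) 0 (PI / 2)
   (minus ((fun x => - cos x * sin x ^ (n + 1)) (PI / 2)) ((fun x => - cos x * sin x ^ (n + 1)) 0))).
{ assert (H0 : is_RInt (fun x => INR (n + 2) * sin x ^ (n + 2) - INR (n + 1) * sin x ^ n) 0 (PI / 2)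
     (minus ((fun x => - cos x * sin x ^ (n + 1)) (PI / 2)) ((fun x => - cos x * sin x ^ (n + 1)) 0))).
  { apply (is_RInt_derive (V:=R_CompleteNormedModule) (fun x => - cos x * sin x ^ (n + 1))).
  - intros x _. auto_derive. auto.
    rewrite !plus_INR. simpl.
    replace (n + 2)%nat with (S (S n)) by lia. replace (n + 1)%nat with (S n) by lia.
    simpl pred. assert (E := sin2_cos2 x). unfold Rsqr in E.
    replace (- cos x * (1 * cos x * ((INR n + 1) * sin x ^ n))) with (-(cos x * cos x) * ((INR n+1) * sin x ^ n)) by ring.
    replace (cos x * cos x) with (1 - sin x * sin x) by lra.
    simpl. ring_simplify. reflexivity.
  - intros x _. apply (ex_derive_continuous (V:=R_NormedModule)). auto_derive. auto. }
  exact H0. }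
assert (H2 : is_RInt (fun x => INR (n + 2) * sin x ^ (n + 2) - INR (n + 1) * sin x ^ n) 0 (PI / 2)
   (INR (n + 2) * W (n + 2) - INR (n + 1) * W n)).
{ exact (is_RInt_minus (V:=R_NormedModule) _ _ _ _ _ _
     (is_RInt_scal _ _ _ (INR (n+2)) _ (RInt_correct (V:=R_CompleteNormedModule) _ _ _ (ex_RInt_sinpow (n + 2))))
     (is_RInt_scal _ _ _ (INR (n+1)) _ (RInt_correct (V:=R_CompleteNormedModule) _ _ _ (ex_RInt_sinpow n)))). }
assert (E := is_RInt_unique (V:=R_CompleteNormedModule) _ _ _ _ H). rewrite (is_RInt_unique (V:=R_CompleteNormedModule) _ _ _ _ H2) in E.
unfold minus, plus, opp in E; simpl in E. rewrite cos_PI2, sin_0 in E. rewrite pow_i in E by lia. lra.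
Qed.

Lemma W_decr n : W (S n) <= W n.
Proof.
unfold W. apply RInt_le.
- assert (0 < PI) by apply PI_RGT_0. lra.
- apply ex_RInt_sinpow.
- apply ex_RInt_sinpow.
- intros x hx. assert (0 < PI) by apply PI_RGT_0.
  assert (0 <= sin x) by (apply sin_ge_0; lra).
  assert (sin x <= 1) by (apply SIN_bound).
  simpl. assert (0 <= sin x ^ n) by (apply pow_le; lra). nra.
Qed.

Lemma W_ge0 n : 0 <= W n.
Proof.
assert (0 < PI) by apply PI_RGT_0.
replace 0 with (RInt (fun _ => 0) 0 (PI / 2)).
2:{ rewrite (RInt_const (V:=R_CompleteNormedModule)). unfold scal; simpl. unfold mult; simpl. ring. }
unfold W. apply RInt_le.
- lra.
- apply (ex_RInt_continuous (V:=R_CompleteNormedModule)). intros; apply continuous_const.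
- apply ex_RInt_sinpow.
- intros x hx. apply pow_le. apply sin_ge_0; lra.
Qed.

Lemma W_prod n : INR (n + 1) * W (n + 1) * W n = PI / 2.
Proof.
induction n.
- simpl. rewrite W1, W0. ring.
- replace (S n + 1)%nat with (n + 2)%nat by lia.
  rewrite W_rec. replace (S n) with (n + 1)%nat by lia. rewrite <- IHn. ring.
Qed.

Definition cw (m : nat) : R := INR (fact (2 * m)) / (INR (fact m) ^ 2 * 4 ^ m).

Lemma W_even m : W (2 * m) = cw m * (PI / 2).
Proof.
induction m.
- simpl. rewrite W0. unfold cw. simpl. field.
- assert (R := W_rec (2 * m)).
  replace (2 * m + 2)%nat with (2 * S m)%nat in R by lia.
  assert (hp : 0 < INR (2 * S m)) by (apply lt_0_INR; lia).
  replace (W (2 * S m)) with (INR (2 * m + 1) * W (2 * m) / INR (2 * S m)) by (rewrite <- R; field; lra).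
  rewrite IHm. unfold cw.
  assert (Ef : fact (2 * S m) = (S (S (2 * m)) * (S (2 * m) * fact (2 * m)))%nat).
  { replace (2 * S m)%nat with (S (S (2 * m))) by lia. rewrite !fact_simpl. reflexivity. }
  rewrite Ef. rewrite fact_simpl. rewrite !mult_INR.
  assert (0 < INR (fact m)) by (apply lt_0_INR, lt_O_fact).
  assert (0 < INR (fact (2 * m))) by (apply lt_0_INR, lt_O_fact).
  replace (INR (2 * m + 1)) with (2 * INR m + 1) by (rewrite plus_INR, mult_INR; simpl; lra).
  replace (INR (2 * S m)) with (2 * INR m + 2) by (rewrite mult_INR, (S_INR m); simpl; lra).
  rewrite !S_INR. rewrite mult_INR. simpl (INR 2). simpl pow.
  assert (0 <= INR m) by apply pos_INR.
  assert (0 < 4 ^ m) by (apply pow_lt; lra). change (INR 0) with 0. field. repeat split; lra.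
Qed.

Lemma lim_cont (f : R -> R) (u : nat -> R) (l : R) :
  continuous f l -> is_lim_seq u l -> is_lim_seq (fun n => f (u n)) (f l).
Proof.
intros hc hu. apply is_lim_seq_continuous; auto. apply continuity_pt_filterlim. exact hc.
Qed.

Lemma lim_inv_INR_shift (a : R) : 0 < a -> is_lim_seq (fun n => / (a * INR n + 1)) 0.
Proof.
intros ha.
replace (Finite 0) with (Rbar_inv p_infty) by reflexivity.
apply is_lim_seq_inv; [|discriminate].
eapply is_lim_seq_le_p_loc with (u := fun n => a * INR n).
- exists 0%nat. intros n _. lra.
- replace p_infty with (Rbar_mult a p_infty).
  + apply is_lim_seq_scal_l. apply is_lim_seq_INR.
  + simpl. destruct (Rle_dec 0 a); [|lra]. destruct (Rle_lt_or_eq_dec 0 a r); [reflexivity|lra].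
Qed.

Lemma cw_pos m : 0 < cw m.
Proof.
unfold cw. apply Rdiv_lt_0_compat. apply INR_fact_pos.
apply Rmult_lt_0_compat. apply pow_lt, INR_fact_pos. apply pow_lt; lra.
Qed.

Lemma cw_bounds m : (1 <= m)%nat ->
  2 * INR m / (PI * (2 * INR m + 1)) <= cw m ^ 2 * INR m <= / PI.
Proof.
intros hm. assert (hm' : 1 <= INR m) by (apply (le_INR 1); auto).
assert (hPI : 0 < PI) by apply PI_RGT_0.
assert (P1 := W_prod (2 * m)).
assert (P2 := W_prod (2 * m - 1)).
replace (2 * m - 1 + 1)%nat with (2 * m)%nat in P2 by lia.
assert (D1 := W_decr (2 * m)).
assert (D2 := W_decr (2 * m - 1)).
replace (S (2 * m - 1)) with (2 * m)%nat in D2 by lia.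
replace (2 * m + 1)%nat with (S (2 * m)) in P1 by lia.
assert (G1 := W_ge0 (S (2 * m))).
assert (G0 := W_ge0 (2 * m)).
rewrite W_even in *.
assert (c := cw_pos m).
rewrite S_INR, mult_INR in P1. rewrite mult_INR in P2. assert (e2 : INR 2 = 2) by (simpl; lra). rewrite e2 in *.
set (w := cw m) in *. set (a := W (S (2 * m))) in *. set (b := W (2 * m - 1)) in *.
split.
-
  assert (E : w * (PI / 2) * a = PI / (2 * (2 * INR m + 1))).
  { apply (Rmult_eq_reg_l (2 * INR m + 1)); [|lra].
    replace ((2 * INR m + 1) * (w * (PI / 2) * a)) with ((2 * INR m + 1) * a * (w * (PI / 2))) by ring.
    rewrite P1. field. lra. }
  assert (w * (PI / 2) * a <= w * (PI / 2) * (w * (PI / 2))).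
  { apply Rmult_le_compat_l; [|lra]. apply Rmult_le_pos; lra. }
  apply (Rmult_le_reg_r (PI ^ 2 / 4)). nra.
  replace (2 * INR m / (PI * (2 * INR m + 1)) * (PI ^ 2 / 4)) with (INR m * (PI / (2 * (2 * INR m + 1)))) by (field; lra).
  replace (w ^ 2 * INR m * (PI ^ 2 / 4)) with (INR m * (w * (PI / 2) * (w * (PI / 2)))) by (field).
  apply Rmult_le_compat_l; lra.
- assert (E : w * (PI / 2) * b = PI / (2 * (2 * INR m))).
  { apply (Rmult_eq_reg_l (2 * INR m)); [|lra].
    replace ((2 * INR m) * (w * (PI / 2) * b)) with (2 * INR m * (w * (PI / 2)) * b) by ring.
    rewrite P2. field. lra. }
  assert (w * (PI / 2) * (w * (PI / 2)) <= w * (PI / 2) * b).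
  { apply Rmult_le_compat_l; [|lra]. apply Rmult_le_pos; lra. }
  apply (Rmult_le_reg_r (PI ^ 2 / 4)). nra.
  replace (/ PI * (PI ^ 2 / 4)) with (INR m * (PI / (2 * (2 * INR m)))) by (field; lra).
  replace (w ^ 2 * INR m * (PI ^ 2 / 4)) with (INR m * (w * (PI / 2) * (w * (PI / 2)))) by (field).
  apply Rmult_le_compat_l; lra.
Qed.

Lemma ln_cw m : (1 <= m)%nat -> ln (cw m ^ 2 * INR m) = 2 * bst (2 * m) - 4 * bst m + ln 2.
Proof.
intros hm. assert (hm' : 1 <= INR m) by (apply (le_INR 1); auto).
assert (F1 := INR_fact_pos m). assert (F2 := INR_fact_pos (2 * m)).
rewrite ln_mult by (try apply pow_lt; try apply cw_pos; lra).
rewrite ln_pow by apply cw_pos.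
unfold cw. rewrite ln_div by (try apply Rmult_lt_0_compat; try apply pow_lt; lra).
rewrite ln_mult by (try apply pow_lt; lra).
rewrite !ln_pow by lra.
unfold bst. rewrite mult_INR. replace (INR 2) with 2 by (simpl; lra).
rewrite (ln_mult 2 (INR m)) by lra.
replace 4 with (2 * 2) by ring. rewrite ln_mult by lra.
field.
Qed.

Lemma Bc_value : Bc = ln (2 * PI) / 2.
Proof.
assert (hPI : 0 < PI) by apply PI_RGT_0.
assert (L1 : is_lim_seq (fun j => cw (S j) ^ 2 * INR (S j)) (/ PI)).
{ apply is_lim_seq_le_le with (u := fun j => / PI - / PI * / (2 * INR (S j) + 1)) (w := fun _ => / PI).
  - intros j. assert (B := cw_bounds (S j) ltac:(lia)).
    assert (0 < INR (S j)) by (apply lt_0_INR; lia).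
    replace (/ PI - / PI * / (2 * INR (S j) + 1)) with (2 * INR (S j) / (PI * (2 * INR (S j) + 1))) by (field; lra).
    lra.
  - replace (Finite (/ PI)) with (Finite (/ PI - / PI * 0)) by (f_equal; ring).
    apply is_lim_seq_minus'. apply is_lim_seq_const. apply is_lim_seq_scal_l with (lu := Finite 0).
    apply (is_lim_seq_incr_1 (fun n => / (2 * INR n + 1))). apply lim_inv_INR_shift. lra.
  - apply is_lim_seq_const. }
assert (L2 : is_lim_seq (fun j => ln (cw (S j) ^ 2 * INR (S j))) (ln (/ PI))).
{ apply lim_cont; auto. apply continuous_ln. apply Rinv_0_lt_compat; lra. }
assert (L3 : is_lim_seq (fun j => 2 * bs (2 * j + 1) - 4 * bs j + ln 2) (2 * Bc - 4 * Bc + ln 2)).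
{ apply is_lim_seq_plus'; [|apply is_lim_seq_const].
  apply is_lim_seq_minus'.
  - apply is_lim_seq_scal_l with (lu := Finite Bc).
    apply (is_lim_seq_subseq bs Bc (fun j => 2 * j + 1)%nat); [|apply bs_lim].
    intros P [N HN]. exists N. intros n hn. apply HN. lia.
  - apply is_lim_seq_scal_l with (lu := Finite Bc). apply bs_lim. }
assert (E : forall j, ln (cw (S j) ^ 2 * INR (S j)) = 2 * bs (2 * j + 1) - 4 * bs j + ln 2).
{ intros j. rewrite ln_cw by lia. unfold bs. replace (S (2 * j + 1)) with (2 * S j)%nat by lia. reflexivity. }
assert (L4 : is_lim_seq (fun j => ln (cw (S j) ^ 2 * INR (S j))) (2 * Bc - 4 * Bc + ln 2)).
{ eapply is_lim_seq_ext; [|exact L3]. intros j; rewrite E; reflexivity. }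
assert (U := is_lim_seq_unique _ _ L2). rewrite (is_lim_seq_unique _ _ L4) in U.
injection U as U. rewrite ln_Rinv in U by lra. rewrite ln_mult by lra. lra.
Qed.

Lemma sqrt_exp_ln x : 0 < x -> sqrt x = exp (ln x / 2).
Proof.
intros hx. rewrite <- (exp_ln x) at 1 by auto.
replace (ln x) with (ln x / 2 + ln x / 2) at 1 by field.
rewrite exp_plus. rewrite sqrt_square; auto. left; apply exp_pos.
Qed.

Lemma exp_mBc : exp (- Bc) = / sqrt (2 * PI).
Proof.
assert (hPI : 0 < PI) by apply PI_RGT_0.
rewrite Bc_value, exp_Ropp, sqrt_exp_ln by lra. reflexivity.
Qed.

Definition pz (l : R) (k : Z) : R :=
  if (k <? 0)%Z then 0 else l ^ Z.to_nat k * exp (- l) / INR (fact (Z.to_nat k)).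

Lemma ev_and (P Q : nat -> Prop) : eventually P -> eventually Q -> eventually (fun n => P n /\ Q n).
Proof.
intros [N1 H1] [N2 H2]. exists (max N1 N2). intros n hn. split; [apply H1|apply H2]; lia.
Qed.

Lemma ev_mono (P Q : nat -> Prop) : (forall n, P n -> Q n) -> eventually P -> eventually Q.
Proof. intros h [N H]. exists N. auto. Qed.

Lemma lim_ev_gt (u : nat -> R) (l : R) (a : R) : is_lim_seq u l -> a < l -> eventually (fun n => a < u n).
Proof.
intros hu ha. apply is_lim_seq_spec in hu.
destruct (hu (mkposreal (l - a) ltac:(lra))) as [N HN]. exists N. intros n hn.
specialize (HN n hn). simpl in HN. apply Rabs_def2 in HN. lra.
Qed.

Lemma lim_ev_lt (u : nat -> R) (l : R) (a : R) : is_lim_seq u l -> l < a -> eventually (fun n => u n < a).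
Proof.
intros hu ha. apply is_lim_seq_spec in hu.
destruct (hu (mkposreal (a - l) ltac:(lra))) as [N HN]. exists N. intros n hn.
specialize (HN n hn). simpl in HN. apply Rabs_def2 in HN. lra.
Qed.

Lemma lim_inf_ev (u : nat -> R) (a : R) : is_lim_seq u p_infty -> eventually (fun n => a < u n).
Proof. intros hu. apply is_lim_seq_spec in hu. apply hu. Qed.

Lemma sqrt_lim_inf (l : nat -> R) : is_lim_seq l p_infty -> is_lim_seq (fun n => sqrt (l n)) p_infty.
Proof.
intros hl. apply is_lim_seq_spec. intros M.
apply is_lim_seq_spec in hl. destruct (hl (Rmax M 0 ^ 2)) as [N HN].
exists N. intros n hn. specialize (HN n hn).
assert (Rmax M 0 = sqrt (Rmax M 0 ^ 2)).
{ rewrite sqrt_pow2; auto. apply Rmax_r. }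
assert (M <= Rmax M 0) by apply Rmax_l.
assert (sqrt (Rmax M 0 ^ 2) < sqrt (l n)).
{ apply sqrt_lt_1_alt. split; [|auto]. apply pow2_ge_0. }
lra.
Qed.

Lemma inv_sqrt_lim (l : nat -> R) : is_lim_seq l p_infty -> is_lim_seq (fun n => / sqrt (l n)) 0.
Proof.
intros hl. replace (Finite 0) with (Rbar_inv p_infty) by reflexivity.
apply is_lim_seq_inv; [|discriminate]. apply sqrt_lim_inf; auto.
Qed.

Lemma key_identity (l : R) (k : nat) : 0 < l -> (1 <= k)%nat ->
  sqrt l * (l ^ k * exp (- l) / INR (fact k)) =
  exp (ln (l / INR k) / 2 - bst k - l * phi ((INR k - l) / l)).
Proof.
intros hl hk. assert (hk' : 1 <= INR k) by (apply (le_INR 1); auto).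
assert (F := INR_fact_pos k).
assert (0 < sqrt l) by (apply sqrt_lt_R0; auto).
rewrite <- (exp_ln (sqrt l * (l ^ k * exp (- l) / INR (fact k)))).
2:{ apply Rmult_lt_0_compat; auto. apply Rdiv_lt_0_compat; auto. apply Rmult_lt_0_compat. apply pow_lt; auto. apply exp_pos. }
f_equal.
rewrite ln_mult by (try apply Rdiv_lt_0_compat; try apply Rmult_lt_0_compat; try apply pow_lt; try apply exp_pos; lra).
rewrite ln_div by (try apply Rmult_lt_0_compat; try apply pow_lt; try apply exp_pos; lra).
rewrite ln_mult by (try apply pow_lt; try apply exp_pos; lra).
rewrite ln_pow, ln_exp by lra.
rewrite sqrt_exp_ln, ln_exp by lra.
unfold phi, bst.
replace (1 + (INR k - l) / l) with (INR k / l) by (field; lra).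
rewrite !ln_div by lra.
field. lra.
Qed.

Lemma IZR_to_nat (k : Z) : (0 <= k)%Z -> INR (Z.to_nat k) = IZR k.
Proof. intros h. rewrite INR_IZR_INZ. f_equal. apply Z2Nat.id. auto. Qed.

Lemma Rabs_le_inv' a b : Rabs a <= b -> - b <= a <= b.
Proof. intros h. assert (a <= Rabs a) by apply Rle_abs. assert (- a <= Rabs a) by (rewrite <- Rabs_Ropp; apply Rle_abs). lra. Qed.

Lemma lclt (l : nat -> R) (k : nat -> Z) (y : R) :
  is_lim_seq l p_infty ->
  is_lim_seq (fun n => (IZR (k n) - l n) / sqrt (l n)) y ->
  is_lim_seq (fun n => sqrt (l n) * pz (l n) (k n)) (gauss y).
Proof.
intros hl hx.
set (x := fun n => (IZR (k n) - l n) / sqrt (l n)) in *.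
set (u := fun n => x n * / sqrt (l n)).
assert (hu : is_lim_seq u 0).
{ replace (Finite 0) with (Finite (y * 0)) by (f_equal; ring).
  apply is_lim_seq_mult'; auto. apply inv_sqrt_lim; auto. }
set (m := fun n => (Z.to_nat (k n) - 1)%nat).
set (A := fun n => - ln (1 + u n) / 2 - bs (m n) - l n * phi (u n)).
assert (EV : eventually (fun n => 4 < l n /\ (-1/2 < u n /\ u n < 1/2))).
{ apply ev_and. apply lim_inf_ev; auto. apply ev_and. apply (lim_ev_gt u 0); auto; lra. apply (lim_ev_lt u 0); auto; lra. }
assert (Hfacts : forall n, 4 < l n /\ (-1/2 < u n /\ u n < 1/2) ->
   0 < sqrt (l n) /\ IZR (k n) = l n * (1 + u n) /\ (1 <= k n)%Z /\ x n ^ 2 = l n * u n ^ 2).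
{ intros n [h1 [h2 h3]].
  assert (hs : 0 < sqrt (l n)) by (apply sqrt_lt_R0; lra).
  assert (hss : sqrt (l n) * sqrt (l n) = l n) by (apply sqrt_sqrt; lra).
  assert (E1 : IZR (k n) = l n * (1 + u n)).
  { unfold u, x. field_simplify; [|lra]. replace (sqrt (l n) ^ 2) with (l n) by (simpl; lra). field. lra. }
  split; [auto|]. split; [auto|]. split.
  - assert (1 < IZR (k n)) by nra. apply le_IZR. simpl. lra.
  - unfold u. field_simplify; [|lra]. replace (sqrt (l n) ^ 2) with (l n) by (simpl; lra). field. lra. }
assert (Eq : eventually (fun n => exp (A n) = sqrt (l n) * pz (l n) (k n))).
{ apply (ev_mono _ _ (fun n h => conj h (Hfacts n h))) in EV.
  revert EV. apply ev_mono. intros n [[h1 [h2 h3]] [hs [E1 [hk E2]]]].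
  unfold pz. destruct (Z.ltb_spec (k n) 0) as [hlt|hge]; [lia|].
  rewrite key_identity by (try lra; lia).
  f_equal. unfold A.
  rewrite IZR_to_nat by lia. rewrite E1.
  replace (l n / (l n * (1 + u n))) with (/ (1 + u n)) by (field; lra).
  rewrite ln_Rinv by lra.
  replace ((l n * (1 + u n) - l n) / l n) with (u n) by (field; lra).
  unfold bs, m. replace (S (Z.to_nat (k n) - 1)) with (Z.to_nat (k n)) by lia.
  field. }
apply (is_lim_seq_ext_loc _ _ _ Eq).
assert (LA : is_lim_seq A (- Bc - y ^ 2 / 2)).
{ unfold A. replace (- Bc - y ^ 2 / 2) with (- 0 / 2 - Bc - y ^ 2 / 2) by field.
  apply is_lim_seq_minus'. apply is_lim_seq_minus'.
  - replace (- 0 / 2) with (- ln (1 + 0) / 2) by (replace (1 + 0) with 1 by ring; rewrite ln_1; field).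
    apply (lim_cont (fun t => - ln (1 + t) / 2)).
    + apply (ex_derive_continuous (V:=R_NormedModule)). auto_derive. lra.
    + auto.
  - apply (is_lim_seq_subseq bs Bc m); [|apply bs_lim].
    intros P [N HN]. 
    assert (E3 := lim_inf_ev l (2 * INR N + 4) hl).
    apply (ev_mono _ _ (fun n h => conj h (Hfacts n h))) in EV.
    destruct (ev_and _ _ EV E3) as [M HM]. exists M. intros n hn.
    destruct (HM n hn) as [[[h1 [h2 h3]] [hs [E1 [hk E2]]]] h4].
    apply HN. unfold m.
    assert (INR N + 1 < INR (Z.to_nat (k n))).
    { rewrite IZR_to_nat by lia. nra. }
    assert (N + 1 < Z.to_nat (k n))%nat.
    { apply INR_lt. rewrite plus_INR. simpl. lra. }
    lia.
  -
    assert (Lx2 : is_lim_seq (fun n => x n ^ 2) (y ^ 2)).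
    { apply (lim_cont (fun t => t ^ 2)); auto. apply (ex_derive_continuous (V:=R_NormedModule)). auto_derive. auto. }
    assert (Lerr : is_lim_seq (fun n => x n ^ 2 * Rabs (u n)) 0).
    { replace (Finite 0) with (Finite (y ^ 2 * Rabs 0)) by (rewrite Rabs_R0; f_equal; ring).
      apply is_lim_seq_mult'; auto. apply (lim_cont Rabs); auto. apply continuous_Rabs. }
    apply is_lim_seq_le_le_loc with (u := fun n => x n ^ 2 / 2 - x n ^ 2 * Rabs (u n))
                                    (w := fun n => x n ^ 2 / 2 + x n ^ 2 * Rabs (u n)).
    + apply (ev_mono _ _ (fun n h => conj h (Hfacts n h))) in EV.
      revert EV. apply ev_mono. intros n [[h1 [h2 h3]] [hs [E1 [hk E2]]]].
      assert (B := phiL3 (u n) ltac:(lra)).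
      apply Rabs_le_inv' in B.
      rewrite E2.
      assert (Rabs (u n) ^ 3 = Rabs (u n) * u n ^ 2).
      { assert (Rabs (u n) * Rabs (u n) = u n * u n).
        { rewrite <- Rabs_mult. apply Rabs_pos_eq. nra. }
        simpl. rewrite Rmult_1_r. replace (Rabs (u n) * (Rabs (u n) * Rabs (u n))) with (Rabs (u n) * (Rabs (u n) * Rabs (u n))) by ring.
        rewrite H. ring. }
      split; nra.
    + replace (y ^ 2 / 2) with (y ^ 2 / 2 - 0) by ring. apply is_lim_seq_minus'; auto.
      apply is_lim_seq_scal_r with (lu := Finite (y^2)) (a := /2). auto.
    + replace (y ^ 2 / 2) with (y ^ 2 / 2 + 0) by ring. apply is_lim_seq_plus'; auto.
      apply is_lim_seq_scal_r with (lu := Finite (y^2)) (a := /2). auto. }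
replace (gauss y) with (exp (- Bc - y ^ 2 / 2)).
- apply (lim_cont exp); auto. apply (ex_derive_continuous (V:=R_NormedModule)). auto_derive. auto.
- unfold gauss. rewrite <- exp_mBc. rewrite <- exp_plus. f_equal. field.
Qed.

Fixpoint q (l : R) (a : nat) (k : Z) : R :=
  match a with
  | O => pz l k
  | S a' => q l a' (k + 1)%Z - q l a' k
  end.

Lemma pz_rec l k : (IZR k + 1) * pz l (k + 1) = l * pz l k.
Proof.
unfold pz.
destruct (Z.ltb_spec (k + 1) 0) as [h1|h1]; destruct (Z.ltb_spec k 0) as [h2|h2]; try lia.
- ring.
- assert (k = -1)%Z by lia. subst. simpl. ring.
- replace (Z.to_nat (k + 1)) with (S (Z.to_nat k)) by lia.
  rewrite fact_simpl, mult_INR. rewrite S_INR. rewrite IZR_to_nat by lia.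
  assert (0 < INR (fact (Z.to_nat k))) by apply INR_fact_pos.
  assert (0 <= IZR k) by (apply IZR_le; lia).
  simpl pow. field. lra.
Qed.

Lemma q_rec l a k :
  (IZR k + 1) * q l a (k + 1)%Z + INR a * q l (pred a) (k + 2)%Z = l * q l a k.
Proof.
revert k. induction a as [|a IH]; intros k.
- simpl. rewrite pz_rec. ring.
- change (q l (S a) (k + 1)%Z) with (q l a (k + 1 + 1)%Z - q l a (k + 1)%Z).
  change (q l (S a) k) with (q l a (k + 1)%Z - q l a k).
  change (pred (S a)) with a.
  assert (E1 := IH k). assert (E2 := IH (k + 1)%Z).
  replace (k + 1 + 1)%Z with (k + 2)%Z in * by lia.
  replace (k + 1 + 2)%Z with (k + 3)%Z in E2 by lia.
  rewrite plus_IZR in E2.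
  assert (F : INR a * q l (pred a) (k + 3)%Z = INR a * q l (pred a) (k + 2)%Z + INR a * q l a (k + 2)%Z).
  { destruct a as [|a']. simpl. ring.
    simpl pred. change (q l (S a') (k + 2)%Z) with (q l a' (k + 2 + 1)%Z - q l a' (k + 2)%Z).
    replace (k + 2 + 1)%Z with (k + 3)%Z by lia. ring. }
  match goal with |- ?L = _ =>
    replace L with ((IZR k + 1 + 1) * q l a (k + 2)%Z + INR a * q l (pred a) (k + 3)%Z
                    - ((IZR k + 1) * q l a (k + 1)%Z + INR a * q l (pred a) (k + 2)%Z)) end.
  + rewrite E2, E1. ring.
  + rewrite F. rewrite S_INR. ring.
Qed.

Definition G (l : R) (a : nat) (k : Z) : R := sqrt l ^ (S a) * q l a k.

Lemma G_rec l a k : 0 < l ->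
  G l (S a) k = G l a (k + 1)%Z * ((l - IZR k - 1) / sqrt l) - INR a * G l (pred a) (k + 2)%Z.
Proof.
intros hl. unfold G. simpl q.
assert (hs : 0 < sqrt l) by (apply sqrt_lt_R0; auto).
assert (hss : sqrt l * sqrt l = l) by (apply sqrt_sqrt; lra).
assert (E := q_rec l a k).
assert (Eq : q l a k = ((IZR k + 1) * q l a (k + 1)%Z + INR a * q l (pred a) (k + 2)%Z) / l).
{ rewrite E. field. lra. }
rewrite Eq.
destruct a as [|a'].
- simpl. set (A := pz l (k + 1)%Z). set (B := pz l (k + 2)%Z). set (s := sqrt l) in *.
  rewrite <- hss. field. lra.
- simpl pred. set (A := q l (S a') (k + 1)%Z). set (B := q l a' (k + 2)%Z). set (s := sqrt l) in *.
  simpl pow. rewrite <- hss. field. lra.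
Qed.

Lemma Int_part_plus1 r : Int_part (r + 1) = (Int_part r + 1)%Z.
Proof.
unfold Int_part.
assert (E : up (r + 1) = (up r + 1)%Z).
{ symmetry. apply tech_up; rewrite plus_IZR; destruct (archimed r); lra. }
rewrite E. lia.
Qed.

Lemma lam_pos d n : (1 <= d)%nat -> (1 <= n)%nat -> 0 < lam d n.
Proof.
intros hd hn. unfold lam. apply Rdiv_lt_0_compat; apply lt_0_INR; lia.
Qed.

Lemma step_lam d n : (1 <= d)%nat -> (1 <= n)%nat -> step d n = / sqrt (lam d n).
Proof.
intros hd hn. unfold step, lam.
assert (0 < INR d) by (apply lt_0_INR; lia). assert (0 < INR n) by (apply lt_0_INR; lia).
rewrite <- sqrt_inv. f_equal. field. lra.
Qed.

Lemma fn_G d n y : f_n d n y = G (lam d n) 0 (Int_part (y * sqrt (lam d n) + lam d n)).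
Proof.
unfold f_n, G, q, pz. cbv zeta.
destruct (Int_part (y * sqrt (lam d n) + lam d n) <? 0)%Z; simpl; ring.
Qed.

Lemma Delta_G d n a y : (1 <= d)%nat -> (1 <= n)%nat ->
  Delta_iter d n a (f_n d n) y = G (lam d n) a (Int_part (y * sqrt (lam d n) + lam d n)).
Proof.
intros hd hn. assert (hl := lam_pos d n hd hn).
assert (hs : 0 < sqrt (lam d n)) by (apply sqrt_lt_R0; auto).
revert y. induction a as [|a IH]; intros y.
- apply fn_G.
- change (Delta_iter d n (S a) (f_n d n) y) with (Defs.Delta d n (Delta_iter d n a (f_n d n)) y).
  unfold Defs.Delta. rewrite !IH. rewrite step_lam by auto.
  replace ((y + / sqrt (lam d n)) * sqrt (lam d n) + lam d n) with ((y * sqrt (lam d n) + lam d n) + 1)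
    by (field; lra).
  rewrite Int_part_plus1.
  unfold G. simpl q. simpl pow. field. lra.
Qed.

Lemma gauss_is_derive y : is_derive gauss y (- y * gauss y).
Proof.
unfold gauss. assert (0 < sqrt (2 * PI)) by (apply sqrt_lt_R0; assert (0 < PI) by apply PI_RGT_0; lra).
auto_derive. auto. unfold Rdiv. simpl. field. lra.
Qed.

Lemma gauss_rec_all a : forall b, (b <= a)%nat ->
  (forall y, ex_derive (Derive_n gauss b) y) /\
  (forall y, Derive_n gauss (S b) y = - y * Derive_n gauss b y - INR b * Derive_n gauss (pred b) y).
Proof.
induction a as [|a IH]; intros b hb.
- assert (b = 0)%nat by lia. subst b. split.
  + intros y. exists (- y * gauss y). apply gauss_is_derive.
  + intros y. change (Derive_n gauss 1 y) with (Derive gauss y). rewrite (is_derive_unique _ _ _ (gauss_is_derive y)). simpl. ring.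
- destruct (Nat.le_gt_cases b a) as [h|h]; [apply IH; auto|].
  assert (b = S a) by lia. subst b.
  destruct (IH a (le_n a)) as [Ea Ra].
  destruct (IH (pred a) ltac:(lia)) as [Epa Rpa].
  assert (Ext : forall t, Derive_n gauss (S a) t = - t * Derive_n gauss a t - INR a * Derive_n gauss (pred a) t) by apply Ra.
  assert (D : forall y : R, is_derive (fun t : R => - t * Derive_n gauss a t - INR a * Derive_n gauss (pred a) t) y
      (- Derive_n gauss a y - y * Derive_n gauss (S a) y - INR a * Derive_n gauss (S (pred a)) y)).
  { intros y.
    destruct (Ea y) as [da Hda]. destruct (Epa y) as [dpa Hdpa].
    assert (e1 : Derive_n gauss (S a) y = da) by (simpl; apply is_derive_unique; auto).
    assert (e2 : Derive_n gauss (S (pred a)) y = dpa) by (simpl; apply is_derive_unique; auto).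
    rewrite e1, e2.
    apply (is_derive_minus (fun t => - t * Derive_n gauss a t) (fun t => INR a * Derive_n gauss (pred a) t)).
    + replace (- Derive_n gauss a y - y * da) with ((-1) * Derive_n gauss a y + (- y) * da) by ring.
      apply (is_derive_mult (fun t => - t) (Derive_n gauss a)); auto.
      * auto_derive; auto; ring.
      * intros; apply Rmult_comm.
    + apply (is_derive_scal (Derive_n gauss (pred a))). auto. }
  split.
  + intros y. exists (- Derive_n gauss a y - y * Derive_n gauss (S a) y - INR a * Derive_n gauss (S (pred a)) y).
    eapply is_derive_ext; [|apply D]. intros t. symmetry. apply Ext.
  + intros y. change (Derive_n gauss (S (S a)) y) with (Derive (Derive_n gauss (S a)) y).
    rewrite (Derive_ext _ _ y Ext).
    rewrite (is_derive_unique _ _ _ (D y)).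
    simpl pred.
    destruct a as [|a'].
    * simpl INR. ring.
    * simpl pred. rewrite (S_INR a'). rewrite (S_INR (S a')). rewrite (S_INR a'). ring.
Qed.

Lemma gauss_rec a y :
  Derive_n gauss (S a) y = - y * Derive_n gauss a y - INR a * Derive_n gauss (pred a) y.
Proof. apply (gauss_rec_all a a (le_n a)). Qed.

Lemma ev_lpos (l : nat -> R) : is_lim_seq l p_infty -> eventually (fun n => 0 < l n).
Proof. intros hl. apply lim_inf_ev; auto. Qed.

Lemma shift_lim (l : nat -> R) (k : nat -> Z) (y : R) (j : Z) :
  is_lim_seq l p_infty ->
  is_lim_seq (fun n => (IZR (k n) - l n) / sqrt (l n)) y ->
  is_lim_seq (fun n => (IZR (k n + j) - l n) / sqrt (l n)) y.
Proof.
intros hl hx.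
assert (H : is_lim_seq (fun n => (IZR (k n) - l n) / sqrt (l n) + IZR j * / sqrt (l n)) (y + IZR j * 0)).
{ apply is_lim_seq_plus'; auto. apply is_lim_seq_scal_l with (lu := Finite 0). apply inv_sqrt_lim; auto. }
replace (y + IZR j * 0) with y in H by ring.
eapply is_lim_seq_ext_loc; [|exact H].
generalize (ev_lpos l hl). apply ev_mono. intros n hn.
assert (0 < sqrt (l n)) by (apply sqrt_lt_R0; auto).
rewrite plus_IZR. field. lra.
Qed.

Lemma G_lim_all (l : nat -> R) : is_lim_seq l p_infty -> forall a b, (b <= a)%nat ->
  forall (k : nat -> Z) (y : R), is_lim_seq (fun n => (IZR (k n) - l n) / sqrt (l n)) y ->
  is_lim_seq (fun n => G (l n) b (k n)) (Derive_n gauss b y).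
Proof.
intros hl a. induction a as [|a IH]; intros b hb k y hk.
- assert (b = 0)%nat by lia. subst b.
  eapply is_lim_seq_ext; [|apply (lclt l k y hl hk)].
  intros n. unfold G. simpl. ring.
- destruct (Nat.le_gt_cases b a) as [h|h]; [apply IH; auto|].
  assert (b = S a) by lia. subst b.
  assert (L1 := IH a (le_n a) (fun n => (k n + 1)%Z) y (shift_lim l k y 1 hl hk)).
  assert (L2 := IH (pred a) ltac:(lia) (fun n => (k n + 2)%Z) y (shift_lim l k y 2 hl hk)).
  assert (L3 : is_lim_seq (fun n => (l n - IZR (k n) - 1) / sqrt (l n)) (- y)).
  { assert (H : is_lim_seq (fun n => - ((IZR (k n) - l n) / sqrt (l n)) - / sqrt (l n)) (- y - 0)).
    { apply is_lim_seq_minus'. apply (is_lim_seq_opp _ (Finite y)) in hk. exact hk. apply inv_sqrt_lim; auto. }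
    replace (- y - 0) with (- y) in H by ring.
    eapply is_lim_seq_ext_loc; [|exact H].
    generalize (ev_lpos l hl). apply ev_mono. intros n hn.
    assert (0 < sqrt (l n)) by (apply sqrt_lt_R0; auto).
    field. lra. }
  assert (L : is_lim_seq (fun n => G (l n) a (k n + 1)%Z * ((l n - IZR (k n) - 1) / sqrt (l n))
                  - INR a * G (l n) (pred a) (k n + 2)%Z)
              (Derive_n gauss a y * (- y) - INR a * Derive_n gauss (pred a) y)).
  { apply is_lim_seq_minus'. apply is_lim_seq_mult'; auto.
    apply is_lim_seq_scal_l with (lu := Finite (Derive_n gauss (pred a) y)). auto. }
  rewrite gauss_rec.
  replace (- y * Derive_n gauss a y - INR a * Derive_n gauss (pred a) y)
    with (Derive_n gauss a y * (- y) - INR a * Derive_n gauss (pred a) y) by ring.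
  eapply is_lim_seq_ext_loc; [|exact L].
  generalize (ev_lpos l hl). apply ev_mono. intros n hn.
  rewrite G_rec by auto. reflexivity.
Qed.

Lemma lam_lim d : (1 <= d)%nat -> is_lim_seq (fun n => lam d n) p_infty.
Proof.
intros hd. assert (0 < INR d) by (apply lt_0_INR; lia).
unfold lam.
eapply is_lim_seq_ext. intros n. unfold Rdiv. apply Rmult_comm.
replace p_infty with (Rbar_mult (/ INR d) p_infty).
- apply is_lim_seq_scal_l. apply is_lim_seq_INR.
- simpl. assert (0 < / INR d) by (apply Rinv_0_lt_compat; auto).
  destruct (Rle_dec 0 (/ INR d)); [|lra]. destruct (Rle_lt_or_eq_dec 0 (/ INR d) r); [reflexivity|lra].
Qed.

Lemma part1 d : (1 <= d)%nat -> forall (alpha : nat) (y : R),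
  is_lim_seq (fun n : nat => Delta_iter d n alpha (f_n d n) y) (Derive_n gauss alpha y).
Proof.
intros hd alpha y.
set (l := fun n => lam d n).
assert (hl : is_lim_seq l p_infty) by (apply lam_lim; auto).
set (k := fun n => Int_part (y * sqrt (l n) + l n)).
assert (hk : is_lim_seq (fun n => (IZR (k n) - l n) / sqrt (l n)) y).
{ apply is_lim_seq_le_le_loc with (u := fun n => y - / sqrt (l n)) (w := fun _ => y).
  - generalize (ev_lpos l hl). apply ev_mono. intros n hn.
    assert (hs : 0 < sqrt (l n)) by (apply sqrt_lt_R0; auto).
    destruct (base_Int_part (y * sqrt (l n) + l n)) as [b1 b2]. fold (k n) in b1, b2.
    split.
    + apply (Rmult_le_reg_r (sqrt (l n))); auto. unfold Rdiv. rewrite Rmult_assoc, Rinv_l by lra.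
      rewrite Rmult_minus_distr_r, Rinv_l by lra. lra.
    + apply (Rmult_le_reg_r (sqrt (l n))); auto. unfold Rdiv. rewrite Rmult_assoc, Rinv_l by lra. lra.
  - replace (Finite y) with (Finite (y - 0)) by (f_equal; ring).
    apply is_lim_seq_minus'. apply is_lim_seq_const. apply inv_sqrt_lim; auto.
  - apply is_lim_seq_const. }
assert (L := G_lim_all l hl alpha alpha (le_n alpha) k y hk).
eapply is_lim_seq_ext_loc; [|exact L].
exists 1%nat. intros n hn. symmetry. apply Delta_G; auto.
Qed.

Lemma exp_le x y : x <= y -> exp x <= exp y.
Proof. intros [h|h]. left; apply exp_increasing; auto. rewrite h; lra. Qed.

Lemma Bc_ge0 : 0 <= Bc.
Proof.
rewrite Bc_value. assert (2 < PI) by (generalize PI2_1; lra).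
assert (0 < ln (2 * PI)). { rewrite <- ln_1. apply ln_increasing; lra. } lra.
Qed.

Lemma s_le_exp s : s <= exp s.
Proof.
destruct (Req_dec s 0) as [->|h]. rewrite exp_0; lra.
assert (H := exp_ineq1 s h). lra.
Qed.

Lemma ln_le_self x : 0 < x -> ln x <= x.
Proof. intros h. rewrite <- (ln_exp x) at 2. apply ln_le; auto. apply s_le_exp. Qed.

Lemma phi_ge0 u : -1 < u -> 0 <= phi u.
Proof.
intros h. destruct (Rle_dec u 0).
- assert (H := phiL1 u h r). nra.
- assert (H := phiL2 u ltac:(lra)). assert (0 <= u ^ 2 / (2 * (1 + u))).
  { apply Rle_mult_inv_pos. nra. lra. } lra.
Qed.

Lemma expo_bound (l H : R) (K : nat) :
  0 < l -> / sqrt l <= H -> 0 <= H -> (1 <= K)%nat ->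
  ln (l / INR K) / 2 - l * phi ((INR K - l) / l) + Rabs ((INR K - l) / sqrt l)
  <= 8 + 16 * exp (1 + H) * H.
Proof.
intros hl hH hH0 hK.
assert (hK' : 1 <= INR K) by (apply (le_INR 1); auto).
set (s := sqrt l).
assert (hs : 0 < s) by (apply sqrt_lt_R0; auto).
assert (hss : s * s = l) by (apply sqrt_sqrt; lra).
set (u := (INR K - l) / l).
assert (hu : -1 < u) by (unfold u; apply (Rmult_lt_reg_r l); auto; unfold Rdiv; rewrite Rmult_assoc, Rinv_l; lra).
assert (Ex : (INR K - l) / s = s * u) by (unfold u; rewrite <- hss; field; lra).
rewrite Ex. rewrite Rabs_mult, (Rabs_pos_eq s) by lra.
assert (Eln : ln (l / INR K) = - ln (1 + u)).
{ unfold u. replace (1 + (INR K - l) / l) with (/ (l / INR K)) by (field; lra).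
  rewrite ln_Rinv. ring. apply Rdiv_lt_0_compat; lra. }
assert (El : l * phi u = INR K * ln (INR K / l) - INR K + l).
{ unfold phi, u. replace (1 + (INR K - l) / l) with (INR K / l) by (field; lra). field. lra. }
assert (hH' : / s <= H) by exact hH.
assert (Ex2 : s * u = (INR K - l) / s) by (rewrite <- Ex; reflexivity).
clearbody u. clearbody s.
assert (hexp : 0 < exp (1 + H)) by apply exp_pos.
assert (hKH : 0 <= 16 * exp (1 + H) * H) by (apply Rmult_le_pos; lra).
destruct (Rle_dec u (-1/2)) as [ha|ha].
-
  assert (P1 := phiL1 u hu ltac:(lra)).
  assert (ln (l / INR K) <= ln l).
  { apply ln_le. apply Rdiv_lt_0_compat; lra. unfold Rdiv. 
    rewrite <- (Rmult_1_r l) at 2. apply Rmult_le_compat_l; [lra|].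
    rewrite <- Rinv_1. apply Rinv_le_contravar; lra. }
  assert (ln l = 2 * ln s). { rewrite <- hss. rewrite ln_mult by auto. ring. }
  assert (ln s <= s) by (apply ln_le_self; auto).
  assert (Rabs u <= 1) by (apply Rabs_le; lra).
  assert (l * (u ^ 2 / 2) <= l * phi u) by (apply Rmult_le_compat_l; lra).
  assert (u ^ 2 >= 1/4) by nra.
  assert (s * Rabs u <= s) by nra.
  assert (l * (u ^ 2 / 2) >= l / 8) by nra. assert (0 <= (s - 8) * (s - 8)) by apply Rle_0_sqr. assert (2 * s - s * s / 8 <= 8) by lra. lra.
- destruct (Rle_dec u 0) as [hb|hb].
  +
    assert (P1 := phiL1 u hu hb).
    rewrite Eln.
    assert (- ln (1 + u) <= 1).
    { assert (ln (1/2) <= ln (1 + u)) by (apply ln_le; lra).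
      rewrite ln_div in H0 by lra. rewrite ln_1 in H0.
      assert (ln 2 <= 1). { assert (H1 := ln_le_self 2 ltac:(lra)). 
        assert (ln 2 < 1). { rewrite <- ln_exp. apply ln_increasing. lra. 
          generalize (exp_ineq1 1 ltac:(lra)). lra. } lra. }
      lra. }
    assert (l * (u ^ 2 / 2) <= l * phi u) by (apply Rmult_le_compat_l; lra).
    rewrite Rabs_left1 by lra.
    set (v := s * - u).
    assert (l * (u ^ 2 / 2) = v ^ 2 / 2).
    { unfold v. rewrite <- hss. field. }
    nra.
  + assert (hc : 0 < u) by lra.
    assert (P2 := phiL2 u ltac:(lra)).
    assert (- ln (1 + u) <= 0). { assert (0 <= ln (1 + u)). { rewrite <- ln_1. apply ln_le; lra. } lra. }
    rewrite Eln. rewrite Rabs_pos_eq by lra.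
    assert (l * (u ^ 2 / (2 * (1 + u))) <= l * phi u) by (apply Rmult_le_compat_l; lra).
    destruct (Rle_dec u 1) as [hd|hd].
    * assert (u ^ 2 / 4 <= u ^ 2 / (2 * (1 + u))).
      { unfold Rdiv. apply Rmult_le_compat_l. nra. apply Rinv_le_contravar; lra. }
      assert (l * (u ^ 2 / 4) <= l * (u ^ 2 / (2 * (1 + u)))) by (apply Rmult_le_compat_l; lra).
      set (v := s * u).
      assert (l * (u ^ 2 / 4) = v ^ 2 / 4) by (unfold v; rewrite <- hss; field).
      nra.
    * assert (u / 4 <= u ^ 2 / (2 * (1 + u))).
      { apply (Rmult_le_reg_r (2 * (1 + u))); [lra|].
        replace (u ^ 2 / (2 * (1 + u)) * (2 * (1 + u))) with (u ^ 2) by (field; lra). nra. }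
      assert (l * (u / 4) <= l * (u ^ 2 / (2 * (1 + u)))) by (apply Rmult_le_compat_l; lra).
      assert (l * (u / 4) <= l * phi u) by lra.
      destruct (Rle_dec 4 s) as [he|he].
      -- assert (l * (u / 4) = s * (s * u) / 4) by (rewrite <- hss; field).
         assert (0 <= (s - 4) * (s * u)) by (apply Rmult_le_pos; nra).
         assert (s * u <= s * (s * u) / 4) by lra.
         lra.
      --
         assert (hsx : s * u <= INR K * H).
         { rewrite Ex2. unfold Rdiv. 
           assert (0 < / s) by (apply Rinv_0_lt_compat; auto).
           assert ((INR K - l) * / s <= INR K * / s) by (apply Rmult_le_compat_r; lra).
           assert (INR K * / s <= INR K * H) by (apply Rmult_le_compat_l; lra).
           lra. }
         assert (hl16 : l < 16) by nra.
         destruct (Rle_dec (16 * exp (1 + H)) (INR K)) as [hf|hf].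
         ++ assert (ln (INR K / l) >= 1 + H).
            { apply Rle_ge. rewrite <- (ln_exp (1 + H)). apply ln_le. apply exp_pos.
              apply (Rmult_le_reg_r l); [lra|]. unfold Rdiv. rewrite Rmult_assoc, Rinv_l, Rmult_1_r by lra.
              nra. }
            assert (INR K * ln (INR K / l) >= INR K * (1 + H)) by (apply Rmult_ge_compat_l; lra).
            lra.
         ++ assert (0 <= l * phi u) by (apply Rmult_le_pos; [lra|apply phi_ge0; lra]).
            assert (INR K * H <= 16 * exp (1 + H) * H) by (apply Rmult_le_compat_r; lra).
            lra.
Qed.

Definition C0 (H : R) := exp (8 + 16 * exp (1 + H) * H).

Lemma base_bound (l H : R) (k : Z) : 0 < l -> / sqrt l <= H -> 0 <= H ->
  Rabs (sqrt l * pz l k) <= C0 H * exp (- Rabs ((IZR k - l) / sqrt l)).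
Proof.
intros hl hH hH0.
assert (hs : 0 < sqrt l) by (apply sqrt_lt_R0; auto).
assert (hss : sqrt l * sqrt l = l) by (apply sqrt_sqrt; lra).
assert (hC : exp 1 <= C0 H).
{ unfold C0. apply exp_le.
  assert (0 <= 16 * exp (1 + H) * H) by (apply Rmult_le_pos; [assert (0 < exp (1+H)) by apply exp_pos; lra| lra]). lra. }
unfold pz. destruct (Z.ltb_spec k 0) as [hk|hk].
- rewrite Rmult_0_r, Rabs_R0. apply Rmult_le_pos. unfold C0; left; apply exp_pos. left; apply exp_pos.
- rewrite Rabs_pos_eq.
  2:{ apply Rmult_le_pos; [lra|]. apply Rmult_le_pos. apply Rmult_le_pos. apply pow_le; lra. left; apply exp_pos.
      left. apply Rinv_0_lt_compat. apply INR_fact_pos. }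
  assert (Key : forall E, sqrt l * (l ^ Z.to_nat k * exp (- l) / INR (fact (Z.to_nat k))) * exp (Rabs ((IZR k - l) / sqrt l)) <= exp E ->
            exp E <= C0 H ->
            sqrt l * (l ^ Z.to_nat k * exp (- l) / INR (fact (Z.to_nat k))) <= C0 H * exp (- Rabs ((IZR k - l) / sqrt l))).
  { intros E h1 h2. rewrite (exp_Ropp (Rabs _)).
    set (a := exp (Rabs ((IZR k - l) / sqrt l))) in *. assert (0 < a) by apply exp_pos.
    apply (Rmult_le_reg_r a). auto.
    replace (C0 H * / a * a) with (C0 H) by (field; apply Rgt_not_eq; lra). lra. }
  destruct (Z.eq_dec k 0) as [e0|ne0].
  + subst k. simpl Z.to_nat. simpl (l ^ 0). simpl fact. simpl INR.
    apply (Key (2 * sqrt l - l)).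
    * replace ((0 - l) / sqrt l) with (- sqrt l) by (replace (0 - l) with (- (sqrt l * sqrt l)) by lra; field; lra).
      rewrite Rabs_Ropp, Rabs_pos_eq by lra.
      replace (2 * sqrt l - l) with (sqrt l + (- l + sqrt l)) by ring.
      rewrite exp_plus, exp_plus. 
      assert (sqrt l <= exp (sqrt l)) by apply s_le_exp.
      replace (l ^ Z.to_nat 0 * exp (- l) / INR (fact (Z.to_nat 0))) with (exp (- l)) by (simpl; field).
      assert (0 < exp (- l) * exp (sqrt l)) by (apply Rmult_lt_0_compat; apply exp_pos). nra.
    * eapply Rle_trans; [|exact hC]. 
      apply exp_le. assert (0 <= (sqrt l - 1) * (sqrt l - 1)) by apply Rle_0_sqr. lra.
  + assert (hK : (1 <= Z.to_nat k)%nat) by lia.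
    apply (Key (ln (l / INR (Z.to_nat k)) / 2 - l * phi ((INR (Z.to_nat k) - l) / l) + Rabs ((IZR k - l) / sqrt l))).
    * rewrite key_identity by auto. rewrite <- exp_plus. apply exp_le. 
      assert (bst (Z.to_nat k) >= 0).
      { replace (Z.to_nat k) with (S (Z.to_nat k - 1)) by lia. 
        assert (Hb := bs_ge_B (Z.to_nat k - 1)). unfold bs in Hb. assert (Hc := Bc_ge0). lra. }
      lra.
    * unfold C0. apply exp_le. rewrite <- (IZR_to_nat k) by lia.
      apply expo_bound; auto.
Qed.

Definition T (x : R) (m : nat) := (1 + Rabs x) ^ m * exp (- Rabs x).

Lemma T_pos x m : 0 <= T x m.
Proof. unfold T. apply Rmult_le_pos. apply pow_le. assert (0 <= Rabs x) by apply Rabs_pos. lra. left; apply exp_pos. Qed.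

Lemma T_shift x c m H : Rabs c <= H -> T (x + c) m <= (1 + H) ^ m * exp H * T x m.
Proof.
intros hc. unfold T.
assert (a1 : Rabs (x + c) <= Rabs x + Rabs c) by apply Rabs_triang.
assert (a2 : Rabs x <= Rabs (x + c) + Rabs c).
{ replace x with ((x + c) + - c) at 1 by ring. rewrite <- (Rabs_Ropp c). apply Rabs_triang. }
assert (p1 : 0 <= Rabs x) by apply Rabs_pos. assert (p2 : 0 <= Rabs c) by apply Rabs_pos.
assert (b1 : (1 + Rabs (x + c)) ^ m <= (1 + H) ^ m * (1 + Rabs x) ^ m).
{ rewrite <- Rpow_mult_distr. apply pow_incr. split. assert (0 <= Rabs (x + c)) by apply Rabs_pos. lra. nra. }
assert (b2 : exp (- Rabs (x + c)) <= exp H * exp (- Rabs x)).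
{ rewrite <- exp_plus. apply exp_le. lra. }
assert (0 <= (1 + Rabs (x + c)) ^ m) by (apply pow_le; assert (0 <= Rabs (x + c)) by apply Rabs_pos; lra).
assert (0 <= exp (- Rabs (x + c))) by (left; apply exp_pos).
replace ((1 + H) ^ m * exp H * ((1 + Rabs x) ^ m * exp (- Rabs x))) with
  (((1 + H) ^ m * (1 + Rabs x) ^ m) * (exp H * exp (- Rabs x))) by ring.
apply Rmult_le_compat; auto.
Qed.

Lemma T_mono x m m' : (m <= m')%nat -> T x m <= T x m'.
Proof.
intros h. unfold T. apply Rmult_le_compat_r. left; apply exp_pos.
apply Rle_pow; auto. assert (0 <= Rabs x) by apply Rabs_pos. lra.
Qed.

Lemma G_bound_all (H : R) : 0 <= H -> forall a b, (b <= a)%nat ->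
  exists C, 0 <= C /\ forall l k, 0 < l -> / sqrt l <= H ->
    Rabs (G l b k) <= C * T ((IZR k - l) / sqrt l) b.
Proof.
intros hH a. induction a as [|a IH]; intros b hb.
- assert (b = 0)%nat by lia. subst b. exists (C0 H). split. unfold C0; left; apply exp_pos.
  intros l k hl hs. unfold G, T. simpl q. simpl pow. rewrite Rmult_1_r, Rmult_1_l.
  apply base_bound; auto.
- destruct (Nat.le_gt_cases b a) as [h|h]; [apply IH; auto|].
  assert (b = S a) by lia. subst b.
  destruct (IH a (le_n a)) as [Ca [hCa Ba]].
  destruct (IH (pred a) ltac:(lia)) as [Cp [hCp Bp]].
  exists (Ca * ((1 + H) ^ a * exp H) * (1 + H) + INR a * (Cp * ((1 + 2 * H) ^ (pred a) * exp (2 * H)))).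
  split.
  { assert (0 <= (1 + H) ^ a) by (apply pow_le; lra). assert (0 <= (1 + 2 * H) ^ pred a) by (apply pow_le; lra).
    assert (0 < exp H) by apply exp_pos. assert (0 < exp (2 * H)) by apply exp_pos. assert (0 <= INR a) by apply pos_INR.
    apply Rplus_le_le_0_compat; repeat apply Rmult_le_pos; lra. }
  intros l k hl hs.
  assert (hsq : 0 < sqrt l) by (apply sqrt_lt_R0; auto).
  rewrite G_rec by auto.
  set (x := (IZR k - l) / sqrt l).
  assert (hinv : 0 < / sqrt l) by (apply Rinv_0_lt_compat; auto).
  assert (e1 : (IZR (k + 1) - l) / sqrt l = x + / sqrt l) by (unfold x; rewrite plus_IZR; field; lra).
  assert (e2 : (IZR (k + 2) - l) / sqrt l = x + 2 * / sqrt l) by (unfold x; rewrite plus_IZR; field; lra).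
  assert (e3 : (l - IZR k - 1) / sqrt l = - (x + / sqrt l)) by (unfold x; field; lra).
  specialize (Ba l (k + 1)%Z hl hs). rewrite e1 in Ba.
  specialize (Bp l (k + 2)%Z hl hs). rewrite e2 in Bp.
  assert (S1 := T_shift x (/ sqrt l) a H ltac:(rewrite Rabs_pos_eq; lra)).
  assert (S2 := T_shift x (2 * / sqrt l) (pred a) (2 * H) ltac:(rewrite Rabs_pos_eq; lra)).
  assert (M1 := T_mono x (pred a) (S a) ltac:(lia)).
  assert (M0 : Rabs (x + / sqrt l) * T x a <= (1 + H) * T x (S a)).
  { unfold T. simpl pow. assert (Rabs (x + / sqrt l) <= Rabs x + H).
    { eapply Rle_trans. apply Rabs_triang. rewrite (Rabs_pos_eq (/ sqrt l)); lra. }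
    assert (0 <= (1 + Rabs x) ^ a * exp (- Rabs x)).
    { apply Rmult_le_pos. apply pow_le. assert (0 <= Rabs x) by apply Rabs_pos. lra. left; apply exp_pos. }
    assert (0 <= Rabs x) by apply Rabs_pos.
    replace ((1 + H) * ((1 + Rabs x) * (1 + Rabs x) ^ a * exp (- Rabs x))) with
      (((1 + H) * (1 + Rabs x)) * ((1 + Rabs x) ^ a * exp (- Rabs x))) by ring.
    apply Rmult_le_compat_r; auto. nra. }
  assert (Tp := T_pos x a). assert (TpS := T_pos x (S a)). assert (Tpp := T_pos x (pred a)).
  assert (Tsh1 := T_pos (x + / sqrt l) a).
  eapply Rle_trans. apply Rabs_triang. rewrite Rabs_Ropp.
  rewrite !Rabs_mult, e3, Rabs_Ropp. rewrite (Rabs_pos_eq (INR a)) by apply pos_INR.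
  assert (P1 : Rabs (G l a (k + 1)) * Rabs (x + / sqrt l) <= Ca * ((1 + H) ^ a * exp H) * (1 + H) * T x (S a)).
  { eapply Rle_trans. apply Rmult_le_compat_r. apply Rabs_pos. exact Ba.
    eapply Rle_trans. apply Rmult_le_compat_r. apply Rabs_pos. apply Rmult_le_compat_l. exact hCa. exact S1.
    replace (Ca * ((1 + H) ^ a * exp H * T x a) * Rabs (x + / sqrt l)) with
      (Ca * ((1 + H) ^ a * exp H) * (Rabs (x + / sqrt l) * T x a)) by ring.
    replace (Ca * ((1 + H) ^ a * exp H) * (1 + H) * T x (S a)) with
      (Ca * ((1 + H) ^ a * exp H) * ((1 + H) * T x (S a))) by ring.
    apply Rmult_le_compat_l; auto. apply Rmult_le_pos; auto. apply Rmult_le_pos. apply pow_le; lra. left; apply exp_pos. }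
  assert (P2 : INR a * Rabs (G l (pred a) (k + 2)) <= INR a * (Cp * ((1 + 2 * H) ^ pred a * exp (2 * H))) * T x (S a)).
  { rewrite Rmult_assoc. apply Rmult_le_compat_l. apply pos_INR.
    eapply Rle_trans. exact Bp.
    eapply Rle_trans. apply Rmult_le_compat_l. exact hCp. exact S2.
    replace (Cp * ((1 + 2 * H) ^ pred a * exp (2 * H)) * T x (S a)) with
      (Cp * ((1 + 2 * H) ^ pred a * exp (2 * H) * T x (S a))) by ring.
    apply Rmult_le_compat_l. exact hCp.
    apply Rmult_le_compat_l. apply Rmult_le_pos. apply pow_le; lra. left; apply exp_pos. exact M1. }
  lra.
Qed.

Fixpoint padd (p q : list R) : list R :=
  match p, q with
  | nil, _ => q
  | _, nil => p
  | a :: p', b :: q' => (a + b) :: padd p' q'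
  end.

Lemma peval_padd p q y : peval (padd p q) y = peval p y + peval q y.
Proof.
revert q. induction p as [|a p IH]; intros q; simpl.
- ring.
- destruct q as [|b q]; simpl. ring. rewrite IH. ring.
Qed.

Lemma peval_scal c p y : peval (map (fun t => c * t) p) y = c * peval p y.
Proof. induction p as [|a p IH]; simpl. ring. rewrite IH. ring. Qed.

Fixpoint Qp (a : nat) : list R :=
  match a with
  | O => 1 :: nil
  | S a' => padd (Qp a') (0 :: 0 :: Qp a')
  end.

Lemma peval_Qp a y : peval (Qp a) y = (1 + y ^ 2) ^ a.
Proof.
induction a as [|a IH].
- simpl. ring.
- change (Qp (S a)) with (padd (Qp a) (0 :: 0 :: Qp a)). rewrite peval_padd.
  change (peval (0 :: 0 :: Qp a) y) with (0 + y * (0 + y * peval (Qp a) y)). rewrite IH.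
  change ((1 + y ^ 2) ^ (S a)) with ((1 + y ^ 2) * (1 + y ^ 2) ^ a). ring.
Qed.

Lemma T_poly y a : T y a <= 2 ^ a * (1 + y ^ 2) ^ a * exp (- Rabs y).
Proof.
unfold T. apply Rmult_le_compat_r. left; apply exp_pos.
rewrite <- Rpow_mult_distr. apply pow_incr. split.
- assert (0 <= Rabs y) by apply Rabs_pos. lra.
- assert (0 <= Rabs y) by apply Rabs_pos.
  assert (Rabs y * Rabs y = y ^ 2) by (simpl; rewrite Rmult_1_r; rewrite <- Rabs_mult; apply Rabs_pos_eq; nra).
  nra.
Qed.

Lemma part2 d : (1 <= d)%nat -> forall alpha : nat, exists P : list R,
      forall (n : nat) (y : R), (1 <= n)%nat ->
        Rabs (Delta_iter d n alpha (f_n d n) y) < peval P y * exp (- Rabs y).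
Proof.
intros hd alpha.
set (H := sqrt (INR d)).
assert (hH : 0 <= H) by apply sqrt_pos.
destruct (G_bound_all H hH alpha alpha (le_n alpha)) as [C [hC B]].
set (C' := C * ((1 + H) ^ alpha * exp H) * 2 ^ alpha).
exists (padd (map (fun t => C' * t) (Qp alpha)) (1 :: nil)).
intros n y hn.
rewrite peval_padd, peval_scal, peval_Qp. simpl peval. rewrite Rmult_0_r, Rplus_0_r.
set (l := lam d n).
assert (hl : 0 < l) by (apply lam_pos; auto).
assert (hs : 0 < sqrt l) by (apply sqrt_lt_R0; auto).
assert (hsH : / sqrt l <= H).
{ unfold H, l. rewrite <- (step_lam d n) by auto. unfold step. apply sqrt_le_1_alt.
  assert (1 <= INR n) by (apply (le_INR 1); auto). assert (1 <= INR d) by (apply (le_INR 1); auto).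
  unfold Rdiv. rewrite <- (Rmult_1_r (INR d)) at 2. apply Rmult_le_compat_l; [lra|].
  rewrite <- Rinv_1. apply Rinv_le_contravar; lra. }
rewrite Delta_G by auto. fold l.
set (k := Int_part (y * sqrt l + l)).
specialize (B l k hl hsH).
destruct (base_Int_part (y * sqrt l + l)) as [b1 b2]. fold k in b1, b2.
set (c := (IZR k - l) / sqrt l - y).
assert (hinv : 0 < / sqrt l) by (apply Rinv_0_lt_compat; auto).
assert (hc : Rabs c <= H).
{ assert (Ec : c = (IZR k - (y * sqrt l + l)) / sqrt l) by (unfold c; field; lra).
  rewrite Ec. unfold Rdiv. rewrite Rabs_mult, (Rabs_pos_eq (/ sqrt l)) by lra.
  assert (Rabs (IZR k - (y * sqrt l + l)) <= 1) by (apply Rabs_le; lra).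
  assert (Rabs (IZR k - (y * sqrt l + l)) * / sqrt l <= 1 * / sqrt l) by (apply Rmult_le_compat_r; lra).
  lra. }
assert (Ex : (IZR k - l) / sqrt l = y + c) by (unfold c; ring).
rewrite Ex in B.
assert (S := T_shift y c alpha H hc).
assert (Tp := T_poly y alpha).
assert (0 <= (1 + H) ^ alpha * exp H) by (apply Rmult_le_pos; [apply pow_le; lra | left; apply exp_pos]).
assert (Rabs (G l alpha k) <= C' * (1 + y ^ 2) ^ alpha * exp (- Rabs y)).
{ eapply Rle_trans. exact B.
  eapply Rle_trans. apply Rmult_le_compat_l. exact hC. exact S.
  unfold C'.
  replace (C * ((1 + H) ^ alpha * exp H) * 2 ^ alpha * (1 + y ^ 2) ^ alpha * exp (- Rabs y)) with
    (C * ((1 + H) ^ alpha * exp H * (2 ^ alpha * (1 + y ^ 2) ^ alpha * exp (- Rabs y)))) by ring.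
  apply Rmult_le_compat_l. exact hC. apply Rmult_le_compat_l; auto. }
assert (0 < exp (- Rabs y)) by apply exp_pos.
nra.
Qed.

Theorem lemma5 (d : nat) (hd : (1 <= d)%nat) :
  (forall (alpha : nat) (y : R),
      is_lim_seq (fun n : nat => Delta_iter d n alpha (f_n d n) y)
                 (Derive_n gauss alpha y)) /\
  (forall alpha : nat, exists P : list R,
      forall (n : nat) (y : R), (1 <= n)%nat ->
        Rabs (Delta_iter d n alpha (f_n d n) y) < peval P y * exp (- Rabs y)).
Proof. split. apply part1; auto. apply part2; auto. Qed.
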